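(* Let $N\ge 1$ and let $u^1,\dots,u^{N+1}$ be independent variables. Let $\sigma^0=1$ and $\sigma^r$ ($1\le r\le N$) be the elementary symmetric polynomials of $u^1,\dots,u^N$, so $\prod_{i=1}^N(p+u^i)=\sum_{i=0}^Np^i\sigma^{N-i}$, and define $$s^r=\sum_{n=0}^{r}(-1)^n\sigma^{r-n}(u^{N+1})^n,\qquad r=1,\dots,N.$$ Then for all $m,i\in\{1,\dots,N\}$, $$\frac{\partial s^m}{\partial u^i}+\frac{\partial s^m}{\partial u^{N+1}}=(u^{N+1}-u^i)\,P_{m,i},$$ where $P_{m,i}$ is a polynomial in $u^1,\dots,u^{N+1}$ of degree $m-2$ (to be read as $P_{m,i}=0$ when $m=1$).
   Context: The $s^r$ are the coefficients in the expansion $\frac{\prod_{i=1}^N(p+u^i)}{p+u^{N+1}}=\sum_{n=0}^{N-1}p^ns^{N-1-n}+\frac{s^N}{p+u^{N+1}}$ (with $s^0=1$). *)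

(* Defs.v *)
From HB Require Import structures.
From mathcomp Require Import all_boot all_order all_algebra.
From mathcomp Require Import mpoly.
Set Implicit Arguments. Unset Strict Implicit. Unset Printing Implicit Defensive.
Import Order.TTheory GRing.Theory Num.Theory.
Local Open Scope ring_scope.

(* Variables u^1, ..., u^(N+1) are 'X_0, ..., 'X_N of {mpoly R[N.+1]};
   u^(N+1) is 'X_(ord_max). *)

Definition sigma (R : comRingType) (N r : nat) : {mpoly R[N.+1]} :=
  \sum_(h : {set 'I_N.+1} | (#|h| == r) && (ord_max \notin h))
     \prod_(k in h) 'X_k.

Definition spoly (R : comRingType) (N r : nat) : {mpoly R[N.+1]} :=
  \sum_(0 <= n < r.+1)
     ((-1) ^+ n * sigma R N (r - n) * 'X_(@ord_max N) ^+ n).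

(* Main.v *)
Require Import Defs.
From HB Require Import structures.
From mathcomp Require Import all_boot all_order all_algebra.
From mathcomp Require Import mpoly ring zify.
Import Order.TTheory GRing.Theory Num.Theory.
Local Open Scope ring_scope.

Section Gen.
Variables (R : comRingType) (t u : R) (e : nat -> R).
Definition dd k := if k is k'.+1 then e k' else 0.

Lemma gen_id m : (0 < m)%N ->
 \sum_(0 <= n < m.+1) ((-1)^+n * (t^+n * dd (m-n) + n%:R * t^+n.-1 * (e (m-n) + u * dd (m-n))))
 = (t - u) * \sum_(0 <= b < m.-1) ((-1)^+b * b.+1%:R * t^+b * e (m - b.+2)).
Proof.
move=> m0.
pose h n := (-1)^+n * n%:R * t^+n.-1 * dd (m-n).
have C1 : \sum_(0 <= b < m.-1) ((-1)^+b * b.+1%:R * t^+b * e (m - b.+2))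
    = - \sum_(0 <= n < m.+1) h n.
  rewrite big_nat_recl // {1}/h mulr0n mulr0 !mul0r add0r.
  rewrite /h; case: m m0 {h} => [//|M] _ /=.
  rewrite big_nat_recr //= subnn /= mulr0 addr0 -sumrN.
  apply: eq_big_nat => b /andP[_ bM].
  have -> : (M.+1 - b.+1 = (M.+1 - b.+2).+1)%N by lia.
  rewrite /= exprS; ring.
pose g n := (-1)^+n * n%:R * t^+n.-1 * e (m-n).
have C2 : \sum_(0 <= n < m.+1) ((-1)^+n * (n%:R * t^+n.-1 * e (m-n) + n.+1%:R * t^+n * dd (m-n))) = 0.
  rewrite big_nat_recr //= subnn /= mulr0 addr0.
  have -> : \sum_(0 <= n < m) ((-1)^+n * (n%:R * t^+n.-1 * e (m-n) + n.+1%:R * t^+n * dd (m-n)))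
      = - \sum_(0 <= n < m) (g n.+1 - g n).
    rewrite -sumrN; apply: eq_big_nat => n /andP[_ nm].
    rewrite /g.
    have -> : (m - n = (m - n.+1).+1)%N by lia.
    rewrite /= exprS; ring.
  rewrite telescope_sumr // /g /= mulr0 mul0r subnn; ring.
apply/eqP; rewrite -subr_eq0 C1 mulrN opprK mulr_sumr -big_split /=; apply/eqP.
rewrite -[RHS]C2.
apply: eq_bigr => -[|n] _ /=; rewrite /h /=; first ring.
rewrite !exprS; ring.
Qed.
End Gen.
Arguments dd {R} e k.
Arguments gen_id {R} t u e m.

Section S.
Variables (R : numDomainType) (N : nat).
Notation MP := {mpoly R[N.+1]}.

Lemma mderivXU (j k : 'I_N.+1) : mderiv j ('X_k : MP) = (k == j)%:R.
Proof.
rewrite mderivX mnm1E; case: eqP => [->|_]; last by rewrite scale0r.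
have -> : (U_(j) - U_(j))%MM = 0%MM by apply/mnmP => l; rewrite mnmBE mnm0E subnn.
by rewrite mpolyX0 scale1r.
Qed.

Lemma mderiv_one (j : 'I_N.+1) : mderiv j (1 : MP) = 0.
Proof. by rewrite -mpolyC1 mderivC. Qed.

Lemma mderiv_prodX_seq j (s : seq 'I_N.+1) : j \notin s ->
  mderiv j (\prod_(k <- s) ('X_k : MP)) = 0.
Proof.
elim: s => [|a s IH]; first by rewrite big_nil mderiv_one.
rewrite inE negb_or => /andP[ja js].
by rewrite big_cons mderivM mderivXU eq_sym (negbTE ja) IH // mul0r mulr0 addr0.
Qed.

Lemma mderiv_prodX j (h : {set 'I_N.+1}) : j \notin h ->
  mderiv j (\prod_(k in h) ('X_k : MP)) = 0.
Proof. by move=> jh; rewrite -big_enum mderiv_prodX_seq // mem_enum. Qed.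

Lemma homog_prodX (h : {set 'I_N.+1}) :
  (\prod_(k in h) ('X_k : MP)) \is #|h|.-homog.
Proof.
rewrite -big_enum cardE; elim: (enum h) => [|a s IH].
  by rewrite big_nil dhomog1.
rewrite big_cons /=; apply: (dhomogM (d := 1%N)) => //.
rewrite dhomogX; apply/eqP; exact: mdeg1.
Qed.

Definition esub (i : 'I_N.+1) k : MP :=
  \sum_(h : {set 'I_N.+1} | (#|h| == k) && (ord_max \notin h) && (i \notin h))
     \prod_(j in h) 'X_j.

Lemma sigma_split i k : i != ord_max ->
  sigma R N k = esub i k + 'X_i * dd (esub i) k.
Proof.
move=> iM; rewrite /sigma (bigID (fun h : {set _} => i \in h)) /= addrC; congr (_ + _).
case: k => [|k] /=.
  rewrite mulr0 big_pred0 // => h; apply/negbTE.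
  rewrite cards_eq0; apply/andP => -[/andP[/eqP -> _]]; by rewrite inE.
rewrite /esub mulr_sumr.
rewrite (reindex_onto (fun h' => i |: h') (fun h => h :\ i)) /=; last first.
  by move=> h /andP[_ ih]; rewrite setD1K.
apply: eq_big => h'.
  case hi: (i \in h').
    rewrite andbF; apply/negbTE; apply/negP => /andP[_ /eqP E].
    have : i \in (i |: h') :\ i by rewrite E.
    by rewrite !inE eqxx.
  rewrite setU1K ?hi // eqxx andbT setU11 andbT cardsU1 hi /= add1n eqSS.
  by rewrite andbT !inE (eq_sym ord_max) (negbTE iM).
move=> /andP[_ /eqP E]; have hi : i \notin h' by rewrite -E setD11.
by rewrite big_setU1.
Qed.

Local Notation t := ('X_(@ord_max N) : MP).

Lemma mderiv_sign j n : mderiv j ((-1)^+n : MP) = 0.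
Proof.
have -> : ((-1)^+n : MP) = ((-1)^+n)%:MP by rewrite rmorphXn rmorphN1.
by rewrite mderivC.
Qed.

Lemma mderiv_tpow n : mderiv (@ord_max N) (t ^+ n) = n%:R * t ^+ n.-1.
Proof.
elim: n => [|n IH]; first by rewrite expr0 mderiv_one mul0r.
rewrite exprS mderivM mderivXU eqxx IH.
case: n {IH} => [|n] /=; first by rewrite !expr0 mul0r mulr0 addr0 mulr1.
rewrite exprS; ring.
Qed.

Lemma mderiv_i_tpow i n : i != ord_max -> mderiv i (t ^+ n) = 0.
Proof.
move=> iM; elim: n => [|n IH]; first by rewrite expr0 mderiv_one.
by rewrite exprS mderivM mderivXU eq_sym (negbTE iM) IH mul0r mulr0 addr0.
Qed.

Lemma mderiv_esub j i k : (j == i) || (j == ord_max) -> mderiv j (esub i k) = 0.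
Proof.
move=> H; rewrite raddf_sum; apply: big1 => h /andP[/andP[_ hM] hi].
by apply: mderiv_prodX; case/orP: H => /eqP ->.
Qed.

Lemma mderiv_dd j i k : (j == i) || (j == ord_max) -> mderiv j (dd (esub i) k) = 0.
Proof. by case: k => [|k] H /=; [rewrite mderiv0 | rewrite mderiv_esub]. Qed.

Lemma Dsigma_i i k : i != ord_max -> mderiv i (sigma R N k) = dd (esub i) k.
Proof.
move=> iM; rewrite (sigma_split i k iM) mderivD mderivM mderivXU eqxx.
by rewrite mderiv_esub ?eqxx // mderiv_dd ?eqxx // add0r mul1r mulr0 addr0.
Qed.

Lemma Dsigma_M (i : 'I_N.+1) k : i != ord_max -> mderiv (@ord_max N) (sigma R N k) = 0.
Proof.
move=> iM; rewrite (sigma_split i k iM) mderivD mderivM mderivXU (negbTE iM).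
by rewrite mderiv_esub ?eqxx ?orbT // mderiv_dd ?eqxx ?orbT // add0r mul0r mulr0 addr0.
Qed.

Lemma deriv_part m i : (1 <= m)%N -> i != ord_max ->
  mderiv i (spoly R N m) + mderiv ord_max (spoly R N m)
  = ('X_ord_max - 'X_i) * \sum_(0 <= b < m.-1) ((-1)^+b * b.+1%:R * t^+b * esub i (m - b.+2)%N).
Proof.
move=> m1 iM; rewrite -(gen_id t 'X_i (esub i) m) //.
rewrite /spoly !raddf_sum -big_split /=; apply: eq_bigr => n _.
rewrite !mderivM !mderiv_sign Dsigma_i // (Dsigma_M i _ iM) mderiv_tpow mderiv_i_tpow //.
rewrite (sigma_split i (m - n) iM); ring.
Qed.

Lemma homog_eq (d e : nat) (p : MP) : d = e -> p \is d.-homog -> p \is e.-homog.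
Proof. by move->. Qed.

Lemma homog_esub i k : esub i k \is k.-homog.
Proof.
apply: rpred_sum => h /andP[/andP[/eqP <- _] _]; exact: homog_prodX.
Qed.

Lemma homog_C (c : R) : (c%:MP : MP) \is 0.-homog.
Proof. rewrite -alg_mpolyC; apply: dhomogZ; exact: dhomog1. Qed.

Definition Ppoly i m : MP :=
  \sum_(0 <= b < m.-1) ((-1)^+b * b.+1%:R * t^+b * esub i (m - b.+2)%N).

Lemma homog_P i m : Ppoly i m \is (m - 2)%N.-homog.
Proof.
rewrite /Ppoly big_nat_cond; apply: rpred_sum => b /andP[/andP[_ bm] _].
have -> : ((-1)^+b * b.+1%:R : MP) = ((-1)^+b * b.+1%:R)%:MP
  by rewrite rmorphM rmorphXn rmorphN1 rmorph_nat.
apply: (homog_eq ((0 + b) + (m - b.+2))%N); first lia.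
apply: dhomogM; last exact: homog_esub.
apply: dhomogM; first exact: homog_C.
apply: (homog_eq (1 * b)%N); first lia.
apply: dhomogMn; rewrite dhomogX; apply/eqP; exact: mdeg1.
Qed.

Definition vv (j : 'I_N.+1) : R := (j == ord_max)%:R.

Lemma eval_esub i k : meval vv (esub i k) = (k == 0)%:R.
Proof.
rewrite rmorph_sum; case: k => [|k].
  rewrite (big_pred1 set0); first by rewrite rmorph_prod big_set0.
  move=> h; rewrite /= cards_eq0; case: (h =P set0) => [->|] //=; by rewrite !inE.
apply: big1 => h /andP[/andP[hk hM] _].
case: (set_0Vmem h) => [h0|[j jh]].
  by move: hk; rewrite h0 cards0.
rewrite rmorph_prod (bigD1 j) //= mevalXU /vv.
have -> : (j == ord_max) = false by apply/negbTE; apply: contraNneq hM => <-.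
by rewrite mul0r.
Qed.

Lemma meval_tpow b : meval vv (t ^+ b) = 1.
Proof.
elim: b => [|b IH]; first by rewrite expr0 meval1.
by rewrite exprS mevalM IH mevalXU /vv eqxx mulr1.
Qed.

Lemma meval_sign b : meval vv ((-1)^+b : MP) = (-1)^+b.
Proof.
have -> : ((-1)^+b : MP) = ((-1)^+b)%:MP by rewrite rmorphXn rmorphN1.
by rewrite mevalC.
Qed.

Lemma meval_nat b : meval vv (b%:R : MP) = b%:R.
Proof. by rewrite -mpolyC_nat mevalC. Qed.

Lemma eval_P i M : meval vv (Ppoly i M.+2) = (-1)^+M * M.+1%:R.
Proof.
rewrite /Ppoly rmorph_sum big_nat_recr //= subnn.
rewrite big1_seq ?add0r.
  by rewrite !mevalM meval_tpow eval_esub meval_sign meval_nat !mulr1.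
move=> b /andP[_]; rewrite mem_index_iota => /andP[_ bM].
have -> : (M.+2 - b.+2 = (M - b.+1).+1)%N by lia.
by rewrite !mevalM eval_esub mulr0.
Qed.

Lemma msize_P i m : (1 <= m)%N -> msize (Ppoly i m) = (m - 1)%N.
Proof.
case: m => [//|[|M]] _.
  by rewrite /Ppoly big_geq // msize0.
have nz : Ppoly i M.+2 != 0.
  apply/eqP => P0; have := congr1 (meval vv) P0.
  rewrite eval_P rmorph0 => /eqP; rewrite mulf_eq0 signr_eq0 pnatr_eq0 //.
have h1 := homog_P i M.+2.
have h2 := dhomog_msize h1.
have := dhomog_uniq nz h1 h2.
have : msize (Ppoly i M.+2) != 0%N by rewrite msize_poly_eq0.
lia.
Qed.

End S.

Theorem lemma9 (R : numDomainType) (N : nat) (hN : (1 <= N)%N)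
    (m : nat) (i : 'I_N.+1) :
  (1 <= m <= N)%N -> i != ord_max ->
  exists P : {mpoly R[N.+1]},
    mderiv i (spoly R N m) + mderiv ord_max (spoly R N m)
      = ('X_ord_max - 'X_i) * P
    /\ msize P = (m - 1)%N.
Proof.
move=> /andP[m1 _] iM; exists (@Ppoly R N i m); split.
  exact: deriv_part.
exact: msize_P.
Qed.
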